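(* Let $(X,d,\mu)$ be as in the context (no doubling assumed) and $x\in X$. Then $\underline{Q}_0(x)\subset\underline{S}_0(x)$ and $\overline{Q}_0(x)\subset\overline{S}_0(x)$. Moreover, $\underline{S}_0(x)\cap\overline{S}_0(x)$ contains at most one point, and when it is nonempty, $\underline{Q}_0(x)=\underline{S}_0(x)$ and $\overline{Q}_0(x)=\overline{S}_0(x)$.
   Context: $(X,d,\mu)$ is a metric space with a positive complete Borel measure $\mu$ such that $0<\mu(B)<\infty$ for every ball $B$; $B_r=B(x,r)$. $\underline{Q}_0(x)=\{q>0:\exists C_q,\ \mu(B_r)/\mu(B_R)\le C_q(r/R)^q\text{ for }0<r<R\le1\}$; $\underline{S}_0(x)=\{q>0:\exists C_q,\ \mu(B_r)\le C_qr^q\text{ for }0<r\le1\}$; $\overline{S}_0(x)=\{q>0:\exists C_q,\ \mu(B_r)\ge C_qr^q\text{ for }0<r\le1\}$; $\overline{Q}_0(x)=\{q>0:\exists C_q,\ \mu(B_r)/\mu(B_R)\ge C_q(r/R)^q\text{ for }0<r<R\le1\}$. *)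

(* Defs.v *)
From Stdlib Require Import Reals.
Open Scope R_scope.

Record is_metric (X : Type) (d : X -> X -> R) : Prop := {
  dist_nonneg : forall x y, 0 <= d x y;
  dist_eq0 : forall x y, d x y = 0 <-> x = y;
  dist_sym : forall x y, d x y = d y x;
  dist_tri : forall x y z, d x z <= d x y + d y z }.

Definition ball {X : Type} (d : X -> X -> R) (x : X) (r : R) : X -> Prop :=
  fun y => d x y < r.

Definition is_open {X : Type} (d : X -> X -> R) (U : X -> Prop) : Prop :=
  forall x, U x -> exists r, 0 < r /\ forall y, ball d x r y -> U y.

Inductive ER := Fin (a : R) | Inf.

(** sum of a series of extended reals (terms assumed nonnegative) *)
Definition er_series (f : nat -> ER) (s : ER) : Prop :=
  match s with
  | Fin l => exists g : nat -> R, (forall n, f n = Fin (g n)) /\ infinite_sum g l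
  | Inf => (exists n, f n = Inf) \/
           (exists g : nat -> R, (forall n, f n = Fin (g n)) /\
              forall M, exists N, forall n, (n >= N)%nat -> M < sum_f_R0 g n)
  end.

Record is_complete_borel_measure {X : Type} (d : X -> X -> R)
    (meas : (X -> Prop) -> Prop) (mu : (X -> Prop) -> ER) : Prop := {
  meas_empty : meas (fun _ => False);
  meas_compl : forall A, meas A -> meas (fun x => ~ A x);
  meas_union : forall A : nat -> X -> Prop, (forall n, meas (A n)) ->
                 meas (fun x => exists n, A n x);
  meas_open : forall U, is_open d U -> meas U;
  mu_nonneg : forall A, meas A -> match mu A with Fin a => 0 <= a | Inf => True end;
  mu_empty : mu (fun _ => False) = Fin 0;
  mu_sigma_add : forall A : nat -> X -> Prop, (forall n, meas (A n)) ->
      (forall m n x, m <> n -> A m x -> A n x -> False) ->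
      er_series (fun n => mu (A n)) (mu (fun x => exists n, A n x));
  mu_complete : forall A N, meas N -> mu N = Fin 0 ->
      (forall x, A x -> N x) -> meas A }.

Definition balls_pos_finite {X : Type} (d : X -> X -> R)
    (mu : (X -> Prop) -> ER) : Prop :=
  forall x r, 0 < r -> exists a, mu (ball d x r) = Fin a /\ 0 < a.

(** real value of mu(B(x,r)) (meaningful under balls_pos_finite) *)
Definition muB {X : Type} (d : X -> X -> R) (mu : (X -> Prop) -> ER)
    (x : X) (r : R) : R :=
  match mu (ball d x r) with Fin a => a | Inf => 0 end.

Definition Qlow0 {X : Type} d mu (x : X) (q : R) : Prop :=
  0 < q /\ exists C, 0 < C /\ forall r R', 0 < r -> r < R' -> R' <= 1 ->
    muB d mu x r / muB d mu x R' <= C * Rpower (r / R') q.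

Definition Slow0 {X : Type} d mu (x : X) (q : R) : Prop :=
  0 < q /\ exists C, 0 < C /\ forall r, 0 < r -> r <= 1 ->
    muB d mu x r <= C * Rpower r q.

Definition Sup0 {X : Type} d mu (x : X) (q : R) : Prop :=
  0 < q /\ exists C, 0 < C /\ forall r, 0 < r -> r <= 1 ->
    muB d mu x r >= C * Rpower r q.

Definition Qup0 {X : Type} d mu (x : X) (q : R) : Prop :=
  0 < q /\ exists C, 0 < C /\ forall r R', 0 < r -> r < R' -> R' <= 1 ->
    muB d mu x r / muB d mu x R' >= C * Rpower (r / R') q.

(* Main.v *)
Require Import Defs.
From Stdlib Require Import Reals Lra.
Open Scope R_scope.

Lemma Rp_pos x y : 0 < Rpower x y.
Proof. unfold Rpower; apply exp_pos. Qed.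

Lemma Rp_one q : Rpower 1 q = 1.
Proof. unfold Rpower; rewrite ln_1, Rmult_0_r; apply exp_0. Qed.

Lemma Rp_div r R q : 0 < r -> 0 < R -> Rpower (r / R) q = Rpower r q / Rpower R q.
Proof.
  intros hr hR. unfold Rdiv. rewrite <- Rpower_mult_distr; [| lra | apply Rinv_0_lt_compat; lra].
  f_equal. rewrite <- Rpower_Ropp. unfold Rpower. rewrite ln_Rinv by lra. f_equal; ring.
Qed.

Lemma Rp_mono s q q0 : 0 < s -> s < 1 -> q <= q0 -> Rpower s q0 <= Rpower s q.
Proof.
  intros h1 h2 h3. unfold Rpower.
  assert (ln s < 0) by (rewrite <- ln_1; apply ln_increasing; lra).
  destruct (Rle_lt_or_eq_dec q q0 h3) as [h|h].
  - left. apply exp_increasing. nra.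
  - subst; lra.
Qed.

Lemma key a b c C : 0 < c -> 0 < C ->
  (forall r, 0 < r -> r <= 1 -> c * Rpower r a <= C * Rpower r b) -> b <= a.
Proof.
  intros hc hC H. destruct (Rle_or_lt b a) as [h|h]; [exact h|exfalso].
  set (t := Rmin (1/2) (c / (2*C))).
  assert (ht0 : 0 < t). { unfold t; apply Rmin_pos; [lra|]. apply Rdiv_lt_0_compat; lra. }
  assert (ht1 : t <= 1/2) by apply Rmin_l.
  assert (ht2 : t <= c/(2*C)) by apply Rmin_r.
  assert (hlt : ln t < 0) by (rewrite <- ln_1; apply ln_increasing; lra).
  set (r := exp (ln t / (b - a))).
  assert (hr0 : 0 < r) by apply exp_pos.
  assert (hr1 : r <= 1).
  { unfold r. rewrite <- exp_0. left. apply exp_increasing.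
    unfold Rdiv. assert (0 < / (b-a)) by (apply Rinv_0_lt_compat; lra). nra. }
  specialize (H r hr0 hr1). unfold Rpower, r in H. rewrite !ln_exp in H.
  replace (b * (ln t / (b - a))) with (a * (ln t / (b - a)) + ln t) in H by (field; lra).
  rewrite exp_plus, exp_ln in H by lra.
  set (E := exp (a * (ln t / (b - a)))) in H.
  assert (0 < E) by apply exp_pos.
  assert (C * t <= c / 2).
  { replace (c/2) with (C * (c / (2*C))) by (field; lra). apply Rmult_le_compat_l; lra. }
  nra.
Qed.

Lemma div_le a b c : 0 < b -> a / b <= c -> a <= c * b.
Proof. intros hb h. replace a with ((a/b)*b) by (field; lra). apply Rmult_le_compat_r; lra. Qed.

Lemma div_ge a b c : 0 < b -> a / b >= c -> a >= c * b.
Proof. intros hb h. replace a with ((a/b)*b) by (field; lra). apply Rle_ge, Rmult_le_compat_r; lra. Qed.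

Lemma frac_le a b c d : 0 < a -> 0 < d -> a <= c -> d <= b -> a / b <= c / d.
Proof.
  intros. unfold Rdiv. apply Rmult_le_compat; try lra.
  left; apply Rinv_0_lt_compat; lra. apply Rinv_le_contravar; lra.
Qed.

Lemma ratio_lt r R : 0 < r -> r < R -> 0 < r / R < 1.
Proof.
  intros. split. apply Rdiv_lt_0_compat; lra.
  apply (Rmult_lt_reg_r R); [lra|]. unfold Rdiv; rewrite Rmult_assoc, Rinv_l; lra.
Qed.

Theorem lemma2p3 (X : Type) (d : X -> X -> R)
    (meas : (X -> Prop) -> Prop) (mu : (X -> Prop) -> ER)
    (Hd : is_metric X d) (Hmu : is_complete_borel_measure d meas mu)
    (Hball : balls_pos_finite d mu) (x : X) :
  (forall q, Qlow0 d mu x q -> Slow0 d mu x q) /\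
  (forall q, Qup0 d mu x q -> Sup0 d mu x q) /\
  (forall p q, Slow0 d mu x p -> Sup0 d mu x p ->
               Slow0 d mu x q -> Sup0 d mu x q -> p = q) /\
  ((exists q, Slow0 d mu x q /\ Sup0 d mu x q) ->
     (forall q, Qlow0 d mu x q <-> Slow0 d mu x q) /\
     (forall q, Qup0 d mu x q <-> Sup0 d mu x q)).
Proof.
  assert (mpos : forall r, 0 < r -> 0 < muB d mu x r).
  { intros r hr. unfold muB. destruct (Hball x r hr) as [a [Ha Hp]]. rewrite Ha; exact Hp. }
  assert (m1 := mpos 1 Rlt_0_1).
  assert (P1 : forall q, Qlow0 d mu x q -> Slow0 d mu x q).
  { intros q [hq [C [hC H]]]. split; [exact hq|].
    exists (C * muB d mu x 1 + muB d mu x 1). split; [nra|].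
    intros r hr hr1. assert (hP := Rp_pos r q).
    destruct (Rle_lt_or_eq_dec r 1 hr1) as [h|h].
    - specialize (H r 1 hr h (Rle_refl 1)). unfold Rdiv at 2 in H.
      rewrite Rinv_1, Rmult_1_r in H. apply div_le in H; [|lra]. nra.
    - subst. rewrite Rp_one. nra. }
  assert (P2 : forall q, Qup0 d mu x q -> Sup0 d mu x q).
  { intros q [hq [C [hC H]]]. split; [exact hq|].
    exists (Rmin (C * muB d mu x 1) (muB d mu x 1)). split.
    { apply Rmin_pos; nra. }
    assert (hm1 := Rmin_l (C * muB d mu x 1) (muB d mu x 1)).
    assert (hm2 := Rmin_r (C * muB d mu x 1) (muB d mu x 1)).
    intros r hr hr1. assert (hP := Rp_pos r q).
    destruct (Rle_lt_or_eq_dec r 1 hr1) as [h|h].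
    - specialize (H r 1 hr h (Rle_refl 1)). unfold Rdiv at 2 in H.
      rewrite Rinv_1, Rmult_1_r in H. apply div_ge in H; [|lra]. nra.
    - subst. rewrite Rp_one. nra. }
  assert (LE : forall p q, Sup0 d mu x p -> Slow0 d mu x q -> q <= p).
  { intros p q [_ [c [hc Hc]]] [_ [C [hC HC]]]. apply (key p q c C hc hC).
    intros r hr hr1. specialize (Hc r hr hr1). specialize (HC r hr hr1). lra. }
  split; [exact P1|]. split; [exact P2|]. split.
  { intros p q a b c e. apply Rle_antisym; [apply LE|]; auto. }
  intros [q0 [HS HU]]. split; intros q; split; auto.
  - intros Hq. assert (hle : q <= q0) by (apply (LE q0 q); auto).
    destruct Hq as [hq _]. split; [exact hq|].
    destruct HS as [_ [C2 [hC2 H2]]]. destruct HU as [_ [C1 [hC1 H1]]].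
    exists (C2 / C1). split; [apply Rdiv_lt_0_compat; lra|].
    intros r R' hr hrR hR1.
    assert (hR : 0 < R') by lra.
    assert (hs := ratio_lt r R' hr hrR).
    apply Rle_trans with ((C2 * Rpower r q0) / (C1 * Rpower R' q0)).
    { apply frac_le; [apply mpos; lra| assert (hpp := Rp_pos R' q0); nra | apply H2; lra | ].
      apply Rge_le, H1; lra. }
    replace ((C2 * Rpower r q0) / (C1 * Rpower R' q0)) with (C2 / C1 * Rpower (r/R') q0).
    2:{ rewrite Rp_div by lra. assert (hpp := Rp_pos R' q0). field. split; lra. }
    apply Rmult_le_compat_l; [left; apply Rdiv_lt_0_compat; lra|].
    apply Rp_mono; lra.
  - intros Hq. assert (hle : q0 <= q) by (apply (LE q q0); auto).
    destruct Hq as [hq _]. split; [exact hq|].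
    destruct HS as [_ [C2 [hC2 H2]]]. destruct HU as [_ [C1 [hC1 H1]]].
    exists (C1 / C2). split; [apply Rdiv_lt_0_compat; lra|].
    intros r R' hr hrR hR1.
    assert (hR : 0 < R') by lra.
    assert (hs := ratio_lt r R' hr hrR).
    apply Rle_ge, Rle_trans with ((C1 * Rpower r q0) / (C2 * Rpower R' q0)).
    2:{ apply frac_le; [assert (hpp := Rp_pos r q0); nra| apply mpos; lra | apply Rge_le, H1; lra | ].
      apply H2; lra. }
    replace ((C1 * Rpower r q0) / (C2 * Rpower R' q0)) with (C1 / C2 * Rpower (r/R') q0).
    2:{ rewrite Rp_div by lra. assert (hpp := Rp_pos R' q0). field. split; lra. }
    apply Rmult_le_compat_l; [left; apply Rdiv_lt_0_compat; lra|].
    apply Rp_mono; lra.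
Qed.
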